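(* Let $d\ge 2$ and let $|\psi^{(r)}\rangle_{DA}=\sum_{i=0}^{d-1}\alpha_i|i\rangle_D|i\oplus r\rangle_A$ be a pure state of a dit/anti-dit $(1,1)$-composite ($r\in\{0,\dots,d-1\}$, $\sum_i|\alpha_i|^2=1$) which is entangled, i.e. at least two of the $\alpha_i$ are nonzero. Consider two copies $|\psi^{(r)}\rangle_{D_1A_1}\otimes|\psi^{(r)}\rangle_{D_2A_2}$, with Alice holding $D_1A_2$ and Bob holding $D_2A_1$. Then there exist two-outcome valid measurements $A_0,A_1$ on the $(1,1)$-composite $D_1A_2$ and $B_0,B_1$ on the $(1,1)$-composite $D_2A_1$ whose CHSH value $F=\langle A_0B_0\rangle+\langle A_0B_1\rangle+\langle A_1B_0\rangle-\langle A_1B_1\rangle$ on this state is strictly larger than $2$. Specifically, if $\alpha_0,\alpha_1>0$ are real, set $\alpha'=\alpha_0^2$, $\beta'=\alpha_1^2$, $|{\uparrow}\rangle=|0\rangle_{D_1}|r\rangle_{A_2}$, $|{\downarrow}\rangle=|1\rangle_{D_1}|1\oplus r\rangle_{A_2}$, $|{\uparrow'}\rangle=|0\rangle_{D_2}|r\rangle_{A_1}$, $|{\downarrow'}\rangle=|1\rangle_{D_2}|1\oplus r\rangle_{A_1}$, and $\theta\in(0,\pi/2]$ with $\tan\theta=2\alpha'\beta'/(\alpha'^2+\beta'^2)$; let $A_0,A_1,B_0,B_1$ have $+1$-outcome operators $a_0=|{\uparrow}\rangle\langle{\uparrow}|$, $a_1=\tfrac12(|{\uparrow}\rangle+|{\downarrow}\rangle)(\langle{\uparrow}|+\langle{\downarrow}|)$,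 $b_{0}=\tfrac{1}{2\cos\theta+2}|u_+\rangle\langle u_+|$, $b_1=\tfrac{1}{2\cos\theta+2}|u_-\rangle\langle u_-|$ with $|u_\pm\rangle=(\cos\theta+1)|{\uparrow'}\rangle\pm\sin\theta|{\downarrow'}\rangle$, and $-1$-outcome operators $I-a_x$, $I-b_y$. These are valid measurements and $$F=2+2(\alpha'^2+\beta'^2)\left(\sqrt{1+\frac{4\alpha'^2\beta'^2}{(\alpha'^2+\beta'^2)^2}}-1\right)>2.$$
   Context: Fix an integer $d\ge2$. A dit $D$ and an anti-dit $A$ are each associated with $\mathbb C^d$ with computational orthonormal basis $\{|0\rangle,\dots,|d-1\rangle\}$; $\oplus$ denotes addition modulo $d$. For a dit $D$ and anti-dit $A$ and $k\in\{0,\dots,d-1\}$, the parity-$k$ subspace is $\mathrm{span}\{|s\rangle_D|s\oplus k\rangle_A:s=0,\dots,d-1\}$; the pure states of the $(1,1)$-composite $DA$ are unit vectors lying in a single parity subspace. For two dits $D_1,D_2$ and two anti-dits $A_1,A_2$, pure states are unit vectors of the form $(U\otimes W)|\Psi'\rangle$ with $U$ permuting the dit tensor factors, $W$ permuting the anti-dit tensor factors, and $|\Psi'\rangle$ lying in a single parity subspace of $D_1A_1$ tensored with a single parity subspace of $D_2A_2$. States are convex combinations of projectors onto pure states. A valid measurement on a composite is a POVM whose elements are linear combinations with nonnegative coefficients of projectors onto pure states of that composite; outcome probabilities are $\mathrm{Tr}[P\rho]$. For a two-outcome measurement $X$ with outcomes $\pm1$ for Alice and $Y$ for Bob, $\langle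 XY\rangle=\sum_{a,b=\pm1}ab\,p(a,b\mid X,Y)$. *)

(* Defs.v *)
From mathcomp Require Import all_boot all_order all_algebra.
From mathcomp Require Import reals trigo.
From mathcomp Require Import complex.
Set Implicit Arguments. Unset Strict Implicit. Unset Printing Implicit Defensive.
Import Order.TTheory GRing.Theory Num.Theory.
Local Open Scope ring_scope.
Local Open Scope complex_scope.

Definition ket (R : realType) (T : finType) := T -> R[i].
Definition op (R : realType) (T : finType) := T -> T -> R[i].

Definition bket {R : realType} {T : finType} (x : T) : ket R T :=
  fun y => (y == x)%:R.
Definition kadd (R : realType) (T : finType) (u v : ket R T) : ket R T :=
  fun x => u x + v x.
Definition ksub (R : realType) (T : finType) (u v : ket R T) : ket R T :=
  fun x => u x - v x.
Definition kscale (R : realType) (T : finType) (c : R[i]) (u : ket R T) : ket R T :=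
  fun x => c * u x.
Definition knorm2 (R : realType) (T : finType) (v : ket R T) : R[i] :=
  \sum_x `|v x| ^+ 2.
Definition proj (R : realType) (T : finType) (v : ket R T) : op R T :=
  fun x y => v x * (v y)^*.
Definition idop {R : realType} {T : finType} : op R T := fun x y => (x == y)%:R.
Definition opsub (R : realType) (T : finType) (A B : op R T) : op R T :=
  fun x y => A x y - B x y.
Definition opscale (R : realType) (T : finType) (c : R[i]) (A : op R T) : op R T :=
  fun x y => c * A x y.
Definition opmul (R : realType) (T : finType) (A B : op R T) : op R T :=
  fun x y => \sum_z A x z * B z y.
Definition trace (R : realType) (T : finType) (A : op R T) : R[i] := \sum_x A x x.

Definition oplus (d : nat) (s k : 'I_d) : 'I_d :=
  Ordinal (ltn_pmod (s + k) (leq_ltn_trans (leq0n s) (ltn_ord s))).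

(* index type of a (1,1)-composite: first component = dit, second = anti-dit *)
Notation DA d := ('I_d * 'I_d)%type.

Definition in_parity (R : realType) (d : nat) (k : 'I_d) (v : ket R (DA d)) : Prop :=
  forall s t : 'I_d, t != oplus s k -> v (s, t) = 0.

(* pure states of the (1,1)-composite: unit vectors in a single parity subspace *)
Definition pure11 (R : realType) (d : nat) (v : ket R (DA d)) : Prop :=
  knorm2 v = 1 /\ exists k : 'I_d, in_parity k v.

Definition pure_cone11 (R : realType) (d : nat) (E : op R (DA d)) : Prop :=
  exists (n : nat) (c : 'I_n -> R) (v : 'I_n -> ket R (DA d)),
    (forall m, 0 <= c m) /\ (forall m, pure11 (v m)) /\
    forall x y, E x y = \sum_(m < n) (c m)%:C * proj (v m) x y.

(* a two-outcome measurement: pair (E_{+1}, E_{-1}) of POVM elements *)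
Definition meas2 (R : realType) (d : nat) : Type := (op R (DA d) * op R (DA d))%type.

Definition valid_meas2 (R : realType) (d : nat) (X : meas2 R d) : Prop :=
  pure_cone11 X.1 /\ pure_cone11 X.2 /\
  forall x y, X.1 x y + X.2 x y = idop x y.

Definition tens (R : realType) (T1 T2 : finType) (u : ket R T1) (v : ket R T2)
  : ket R (T1 * T2)%type := fun p => u p.1 * v p.2.

(* P acting on Alice's (D1,A2), Q acting on Bob's (D2,A1), as an operator on
   ((D1,A1),(D2,A2)) *)
Definition aliceD1A2_bobD2A1 (R : realType) (d : nat) (P Q : op R (DA d))
  : op R (DA d * DA d)%type :=
  fun p q => P (p.1.1, p.2.2) (q.1.1, q.2.2) * Q (p.2.1, p.1.2) (q.2.1, q.1.2).

(* p(a,b|X,Y) = Tr[(P_a (x) Q_b) rho];  a = true means outcome +1 *)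
Definition outcome (R : realType) (d : nat) (X : meas2 R d) (a : bool) : op R (DA d) :=
  if a then X.1 else X.2.
Definition prob (R : realType) (d : nat) (X Y : meas2 R d) (a b : bool)
  (rho : op R (DA d * DA d)%type) : R[i] :=
  trace (opmul (aliceD1A2_bobD2A1 (outcome X a) (outcome Y b)) rho).

Definition sgnb (R : realType) (a : bool) : R[i] := if a then 1 else -1.

Definition correl (R : realType) (d : nat) (X Y : meas2 R d) (rho : op R (DA d * DA d)%type)
  : R[i] := \sum_(a : bool) \sum_(b : bool) sgnb R a * sgnb R b * prob X Y a b rho.

Definition CHSH (R : realType) (d : nat) (A0 A1 B0 B1 : meas2 R d)
  (rho : op R (DA d * DA d)%type) : R[i] :=
  correl A0 B0 rho + correl A0 B1 rho + correl A1 B0 rho - correl A1 B1 rho.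

Definition psi (R : realType) (d : nat) (r : 'I_d) (alpha : 'I_d -> R[i]) : ket R (DA d) :=
  fun p => if p.2 == oplus p.1 r then alpha p.1 else 0.

Definition two_copies (R : realType) (d : nat) (r : 'I_d) (alpha : 'I_d -> R[i])
  : op R (DA d * DA d)%type := proj (tens (psi r alpha) (psi r alpha)).

(* Main.v *)
Require Import Defs.
From mathcomp Require Import all_boot all_order all_algebra.
From mathcomp Require Import reals trigo.
From mathcomp Require Import complex.
From mathcomp Require Import ring lra zify.
Import Order.TTheory GRing.Theory Num.Theory.
Local Open Scope ring_scope.
Local Open Scope complex_scope.
Set Implicit Arguments. Unset Strict Implicit.
Section S.
Variables (R : realType) (d : nat) (r : 'I_d) (alpha : 'I_d -> R[i]).
Local Notation C := (R[i]).
Local Notation rho := (two_copies r alpha).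
Local Notation Psi := (tens (psi r alpha) (psi r alpha)).

Definition T (P Q : op R (DA d)) : C :=
  trace (opmul (aliceD1A2_bobD2A1 P Q) rho).

Lemma T_expand P Q : T P Q = \sum_(x : DA d * DA d) \sum_(z : DA d * DA d)
   P (x.1.1, x.2.2) (z.1.1, z.2.2) * Q (x.2.1, x.1.2) (z.2.1, z.1.2) *
   (Psi z * (Psi x)^*).
Proof. by []. Qed.

Definition K (u w : ket R (DA d)) : C :=
  \sum_(z : DA d * DA d) (u (z.1.1, z.2.2))^* * (w (z.2.1, z.1.2))^* * Psi z.

Lemma T_rank1 P Q c c' u w :
  (forall x y, P x y = c * (u x * (u y)^*)) ->
  (forall x y, Q x y = c' * (w x * (w y)^*)) ->
  T P Q = c * c' * (K u w * (K u w)^*).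
Proof.
move=> HP HQ; rewrite T_expand (mulrC (K u w)) /K rmorph_sum mulr_suml mulr_sumr.
apply: eq_bigr => x _; rewrite mulr_sumr mulr_sumr; apply: eq_bigr => z _.
rewrite !rmorphM /= !conjCK.
rewrite HP HQ; ring.
Qed.

Lemma T_suml (I : finType) P Q (N : I -> op R (DA d)) :
  (forall x y, P x y = \sum_(b : I) N b x y) ->
  T P Q = \sum_(b : I) T (N b) Q.
Proof.
move=> HP; rewrite T_expand.
under eq_bigr => x _ do (under eq_bigr => z _ do rewrite HP !mulr_suml; rewrite exchange_big /=).
by rewrite exchange_big.
Qed.

Lemma T_sumr (I : finType) P Q (N : I -> op R (DA d)) :
  (forall x y, Q x y = \sum_(b : I) N b x y) ->
  T P Q = \sum_(b : I) T P (N b).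
Proof.
move=> HQ; rewrite T_expand.
under eq_bigr => x _ do (under eq_bigr => z _ do rewrite HQ mulr_sumr !mulr_suml; rewrite exchange_big /=).
by rewrite exchange_big.
Qed.

Lemma T_subl A B Q : T (opsub A B) Q = T A Q - T B Q.
Proof.
rewrite !T_expand -sumrB; apply: eq_bigr => x _; rewrite -sumrB.
apply: eq_bigr => z _; rewrite /opsub; ring.
Qed.

Lemma T_subr P A B : T P (opsub A B) = T P A - T P B.
Proof.
rewrite !T_expand -sumrB; apply: eq_bigr => x _; rewrite -sumrB.
apply: eq_bigr => z _; rewrite /opsub; ring.
Qed.

Lemma idop_sum x y : (idop x y : C) = \sum_(b : DA d) bket b x * (bket b y)^*.
Proof.
rewrite (bigD1 y) //= big1 => [|b /negbTE nb].
  by rewrite /bket /idop eqxx rmorph1 mulr1 addr0.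
by rewrite /bket [y == b]eq_sym nb rmorph0 mulr0.
Qed.
Lemma sum_reidx (F : DA d * DA d -> C) :
  \sum_(z : DA d * DA d) F z =
  \sum_(x : DA d) \sum_(y : DA d) F ((x.1, y.2), (y.1, x.2)).
Proof.
rewrite pair_bigA /=.
pose phi (p : DA d * DA d) : DA d * DA d := ((p.1.1, p.2.2), (p.2.1, p.1.2)).
have phiK : cancel phi phi by case=> [[a b] [c e]].
rewrite (reindex_inj (can_inj phiK)) /=.
by apply: eq_bigr => [[[a b] [c e]]].
Qed.

Definition psiP (x y : DA d) : C := psi r alpha (x.1, y.2) * psi r alpha (y.1, x.2).

Lemma K_reidx u w : K u w =
  \sum_(x : DA d) \sum_(y : DA d) (u x)^* * (w y)^* * psiP x y.
Proof.
rewrite /K sum_reidx; apply: eq_bigr => [[a b] _]; apply: eq_bigr => [[c e] _].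
by [].
Qed.

Lemma oplus_inj (i j : 'I_d) : oplus i r = oplus j r -> i = j.
Proof.
move=> /(congr1 val) /= /eqP; rewrite eqn_modDr => /eqP.
by rewrite !modn_small // => /val_inj.
Qed.

Lemma psiP_r s x :
  psiP x (s, oplus s r) = (x == (s, oplus s r))%:R * alpha s ^+ 2.
Proof.
case: x => a b; rewrite /psiP /psi /=.
case: (eqVneq a s) => [->|ne].
  rewrite eqxx xpair_eqE eqxx /=.
  by case: eqP => _; rewrite ?mul1r ?mul0r ?mulr0 ?expr2.
rewrite xpair_eqE (negbTE ne) /= mul0r.
case: eqP => [E|]; last by rewrite mul0r.
by move: ne; rewrite (oplus_inj E) eqxx.
Qed.

Lemma psiP_l s y :
  psiP (s, oplus s r) y = (y == (s, oplus s r))%:R * alpha s ^+ 2.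
Proof.
case: y => a b; rewrite /psiP /psi /=.
case: (eqVneq a s) => [->|ne].
  rewrite eqxx xpair_eqE eqxx /=.
  by case: eqP => _; rewrite ?mul1r ?mul0r ?expr2.
rewrite xpair_eqE (negbTE ne) /= mul0r.
do 2 case: ifP; rewrite ?mulr0 ?mul0r // => /eqP E _.
by move: ne; rewrite (oplus_inj E) eqxx.
Qed.
Lemma sum_ind (U : DA d) (H : DA d -> C) :
  \sum_(x : DA d) (x == U)%:R * H x = H U.
Proof.
rewrite (bigD1 U) //= eqxx mul1r big1 ?addr0 // => x /negbTE ->.
by rewrite mul0r.
Qed.

Definition sv (U V : DA d) (p1 p2 : C) : ket R (DA d) :=
  fun x => (x == U)%:R * p1 + (x == V)%:R * p2.

Lemma sum_sv U V p1 p2 (u : ket R (DA d)) (G : DA d -> C) :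
  U != V -> (forall x, u x = sv U V p1 p2 x) ->
  \sum_(x : DA d) (u x)^* * G x = p1^* * G U + p2^* * G V.
Proof.
move=> nUV Hu.
under eq_bigr => x _ do rewrite Hu /sv rmorphD !rmorphM !rmorph_nat mulrDl -!mulrA.
by rewrite big_split /= !sum_ind.
Qed.

Lemma sum_sv_norm U V p1 p2 :
  U != V ->
  \sum_(x : DA d) sv U V p1 p2 x * (sv U V p1 p2 x)^* = p1 * p1^* + p2 * p2^*.
Proof.
move=> nUV.
under eq_bigr => x _ do rewrite mulrC.
rewrite (@sum_sv U V p1 p2 (sv U V p1 p2) (sv U V p1 p2) nUV (fun _ => erefl)) /sv eqxx [V == U]eq_sym (negbTE nUV) eqxx.
by rewrite mul1r mul0r addr0 mul0r add0r mul1r !(mulrC _^*).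
Qed.

Lemma sum_b (b : DA d) (G : DA d -> C) :
  \sum_(x : DA d) (bket b x)^* * G x = G b.
Proof.
under eq_bigr => x _ do rewrite /bket rmorph_nat.
exact: sum_ind.
Qed.
Definition UU (i : 'I_d) : DA d := (i, oplus i r).

Lemma psiP_lU s y : psiP (UU s) y = (y == UU s)%:R * alpha s ^+ 2.
Proof. exact: psiP_l. Qed.
Lemma psiP_rU s x : psiP x (UU s) = (x == UU s)%:R * alpha s ^+ 2.
Proof. exact: psiP_r. Qed.

Lemma UU_neq (i j : 'I_d) : i != j -> UU i != UU j.
Proof. by move=> nij; rewrite /UU xpair_eqE negb_and nij. Qed.

Lemma K_split u w : K u w =
  \sum_(x : DA d) (u x)^* * \sum_(y : DA d) (w y)^* * psiP x y.
Proof.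
rewrite K_reidx; apply: eq_bigr => x _; rewrite mulr_sumr.
by apply: eq_bigr => y _; rewrite mulrA.
Qed.

Lemma K_sv_sv (i j : 'I_d) p1 p2 q1 q2 u w : i != j ->
  (forall x, u x = sv (UU i) (UU j) p1 p2 x) ->
  (forall x, w x = sv (UU i) (UU j) q1 q2 x) ->
  K u w = p1^* * q1^* * alpha i ^+ 2 + p2^* * q2^* * alpha j ^+ 2.
Proof.
move=> nij Hu Hw; have nUV := UU_neq nij.
rewrite K_split (sum_sv _ nUV Hu) !(sum_sv _ nUV Hw) !psiP_lU.
rewrite !eqxx (negbTE nUV) eq_sym (negbTE nUV) /=.
ring.
Qed.

Lemma K_sv_b (i j : 'I_d) p1 p2 u b : i != j ->
  (forall x, u x = sv (UU i) (UU j) p1 p2 x) ->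
  K u (bket b) = sv (UU i) (UU j) (p1^* * alpha i ^+ 2) (p2^* * alpha j ^+ 2) b.
Proof.
move=> nij Hu; have nUV := UU_neq nij.
rewrite K_split (sum_sv _ nUV Hu) !sum_b !psiP_lU /sv.
ring.
Qed.

Lemma K_b_sv (i j : 'I_d) q1 q2 w a : i != j ->
  (forall x, w x = sv (UU i) (UU j) q1 q2 x) ->
  K (bket a) w = sv (UU i) (UU j) (q1^* * alpha i ^+ 2) (q2^* * alpha j ^+ 2) a.
Proof.
move=> nij Hw; have nUV := UU_neq nij.
rewrite K_split sum_b (sum_sv _ nUV Hw) !psiP_rU /sv.
ring.
Qed.

Lemma K_b_b a b : K (bket a) (bket b) = psiP a b.
Proof. by rewrite K_split sum_b sum_b. Qed.
Lemma T_PQ (i j : 'I_d) p1 p2 q1 q2 k l u w P Q : i != j ->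
  (forall x, u x = sv (UU i) (UU j) p1 p2 x) ->
  (forall x, w x = sv (UU i) (UU j) q1 q2 x) ->
  (forall x y, P x y = k * (u x * (u y)^*)) ->
  (forall x y, Q x y = l * (w x * (w y)^*)) ->
  T P Q = k * l * ((p1^* * q1^* * alpha i ^+ 2 + p2^* * q2^* * alpha j ^+ 2) *
                   (p1^* * q1^* * alpha i ^+ 2 + p2^* * q2^* * alpha j ^+ 2)^*).
Proof.
move=> nij Hu Hw HP HQ; rewrite (T_rank1 HP HQ).
by rewrite (K_sv_sv nij Hu Hw).
Qed.

Lemma T_PI (i j : 'I_d) p1 p2 k u P : i != j ->
  (forall x, u x = sv (UU i) (UU j) p1 p2 x) ->
  (forall x y, P x y = k * (u x * (u y)^*)) ->
  T P idop = k * ((p1^* * alpha i ^+ 2) * (p1^* * alpha i ^+ 2)^* +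
                  (p2^* * alpha j ^+ 2) * (p2^* * alpha j ^+ 2)^*).
Proof.
move=> nij Hu HP.
rewrite (T_sumr (N := fun b => proj (bket b)) _ idop_sum).
under eq_bigr => b _.
  rewrite (T_rank1 (c' := 1) (w := bket b) HP); last by move=> x y; rewrite mul1r.
  rewrite (K_sv_b _ nij Hu) mulr1.
over.
by rewrite -mulr_sumr sum_sv_norm // UU_neq.
Qed.

Lemma T_IQ (i j : 'I_d) q1 q2 l w Q : i != j ->
  (forall x, w x = sv (UU i) (UU j) q1 q2 x) ->
  (forall x y, Q x y = l * (w x * (w y)^*)) ->
  T idop Q = l * ((q1^* * alpha i ^+ 2) * (q1^* * alpha i ^+ 2)^* +
                  (q2^* * alpha j ^+ 2) * (q2^* * alpha j ^+ 2)^*).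
Proof.
move=> nij Hw HQ.
rewrite (T_suml (N := fun b => proj (bket b)) _ idop_sum).
under eq_bigr => a _.
  rewrite (T_rank1 (c := 1) (u := bket a) _ HQ); last by move=> x y; rewrite mul1r.
  rewrite (K_b_sv _ nij Hw) mul1r.
over.
by rewrite -mulr_sumr sum_sv_norm // UU_neq.
Qed.
Lemma psi_norm : \sum_(x : DA d) psi r alpha x * (psi r alpha x)^* =
  \sum_(s < d) `|alpha s| ^+ 2.
Proof.
rewrite -(pair_bigA _ (fun s t => psi r alpha (s, t) * (psi r alpha (s, t))^*)) /=.
apply: eq_bigr => s _.
rewrite (bigD1 (oplus s r)) //= big1 => [|t /negbTE nt]; last first.
  by rewrite /psi /= nt mul0r.
by rewrite addr0 /psi /= eqxx normCK.
Qed.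

Lemma T_II : \sum_(s < d) `|alpha s| ^+ 2 = 1 -> T idop idop = 1.
Proof.
move=> Hn.
rewrite (T_suml (N := fun b => proj (bket b)) _ idop_sum).
under eq_bigr => a _.
  rewrite (T_sumr (N := fun b => proj (bket b)) _ idop_sum).
  under eq_bigr => b _.
    rewrite (T_rank1 (c := 1) (c' := 1) (u := bket a) (w := bket b)); 
      try by move=> x y; rewrite mul1r.
    rewrite K_b_b mul1r mul1r.
  over.
over.
rewrite /=.
transitivity (\sum_(z : DA d * DA d) (psi r alpha z.1 * psi r alpha z.2) *
                 (psi r alpha z.1 * psi r alpha z.2)^*).
  by rewrite sum_reidx.
rewrite -(pair_bigA _ (fun z1 z2 => (psi r alpha z1 * psi r alpha z2) *
                 (psi r alpha z1 * psi r alpha z2)^*)) /=.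
transitivity ((\sum_(x : DA d) psi r alpha x * (psi r alpha x)^*) *
              (\sum_(x : DA d) psi r alpha x * (psi r alpha x)^*)).
  rewrite mulr_suml; apply: eq_bigr => z1 _; rewrite mulr_sumr.
  by apply: eq_bigr => z2 _; rewrite rmorphM; ring.
by rewrite psi_norm Hn mul1r.
Qed.
Lemma correl_gen (P Q : op R (DA d)) :
  correl ((P, opsub idop P) : meas2 R d) ((Q, opsub idop Q) : meas2 R d) rho =
  4 * T P Q - 2 * T P idop - 2 * T idop Q + T idop idop.
Proof.
rewrite /correl !big_bool /= /prob /=.
rewrite -/(T _ _) -/(T _ _) -/(T _ _) -/(T _ _).
rewrite !T_subl !T_subr /sgnb; ring.
Qed.
Lemma cone_ext (E E' : op R (DA d)) :
  (forall x y, E x y = E' x y) -> pure_cone11 E' -> pure_cone11 E.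
Proof.
move=> H [n [c [v [c0 [pv HE]]]]]; exists n, c, v; split=> // ; split=> // x y.
by rewrite H HE.
Qed.

Lemma cone0 : pure_cone11 (fun (_ _ : DA d) => 0 : C).
Proof.
exists 0%N, (fun _ => 0), (fun _ => bket (UU (Ordinal (ltn_ord r)))).
split=> [[]|]//; split=> [[]|]// x y; by rewrite big_ord0.
Qed.

Lemma cone_add (E1 E2 : op R (DA d)) : pure_cone11 E1 -> pure_cone11 E2 ->
  pure_cone11 (fun x y => E1 x y + E2 x y).
Proof.
move=> [n1 [c1 [v1 [c10 [pv1 HE1]]]]] [n2 [c2 [v2 [c20 [pv2 HE2]]]]].
exists (n1 + n2)%N,
  (fun m => match split m with inl a => c1 a | inr b => c2 b end),
  (fun m => match split m with inl a => v1 a | inr b => v2 b end).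
split; first by move=> m; case: (split m).
split; first by move=> m; case: (split m).
move=> x y; rewrite big_split_ord /= HE1 HE2; congr (_ + _).
  by apply: eq_bigr => a _; rewrite (unsplitK (inl a)).
by apply: eq_bigr => b _; rewrite (unsplitK (inr b)).
Qed.

Lemma cone_sum (I : finType) (F : I -> op R (DA d)) :
  (forall b, pure_cone11 (F b)) -> pure_cone11 (fun x y => \sum_(b : I) F b x y).
Proof.
move=> HF; rewrite /index_enum; elim: (Finite.enum I) => [|b s IH].
  by apply: cone_ext cone0 => x y; rewrite big_nil.
apply: cone_ext (cone_add (HF b) IH) => x y; by rewrite big_cons.
Qed.
Lemma cjM (a b : C) : (a * b)^* = a^* * b^*. Proof. exact: rmorphM. Qed.
Lemma cjD (a b : C) : (a + b)^* = a^* + b^*. Proof. exact: rmorphD. Qed.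
Lemma cjN (a : C) : (- a)^* = - a^*. Proof. exact: rmorphN. Qed.
Lemma cjR (a : R) : (a%:C)^* = a%:C. Proof. exact: conjc_real. Qed.
Lemma cjK (a : C) : (a^*)^* = a. Proof. exact: conjcK. Qed.
Lemma cjX (a : C) n : (a ^+ n)^* = (a^*) ^+ n. Proof. exact: rmorphXn. Qed.
Lemma NcjM (a b : C) : Num.conj (a * b) = Num.conj a * Num.conj b. Proof. exact: rmorphM. Qed.
Lemma NcjR (a : R) : Num.conj (a%:C) = a%:C. Proof. exact: conjc_real. Qed.
Lemma NcjK (a : C) : Num.conj (Num.conj a) = a. Proof. exact: conjcK. Qed.
Lemma Ncj (a : C) : Num.conj a = a^*. Proof. by []. Qed.
Lemma NcjN' (a : C) : Num.conj (- a) = - Num.conj a. Proof. exact: rmorphN. Qed.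
Lemma RCM (a b : R) : (a * b)%:C = a%:C * b%:C. Proof. exact: rmorphM. Qed.
Lemma RCD (a b : R) : (a + b)%:C = a%:C + b%:C. Proof. exact: rmorphD. Qed.

Lemma cone_single (k : 'I_d) (u : ket R (DA d)) (c m : R) :
  0 <= c -> 0 < m -> in_parity k u -> knorm2 u = m%:C ->
  pure_cone11 (fun x y => c%:C * (u x * (u y)^*)).
Proof.
move=> c0 m0 pu nu.
have [t tt] : exists t : R, t * t = m^-1.
  by exists (Num.sqrt m)^-1; rewrite -invfM -expr2 sqr_sqrtr // ltW.
exists 1%N, (fun _ => c * m), (fun _ => kscale t%:C u).
split; first by move=> _; rewrite mulr_ge0 // ltW.
split.
  move=> _; split; last by exists k => s s' /pu; rewrite /kscale => ->; rewrite mulr0.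
  rewrite /knorm2.
  under eq_bigr => x _ do rewrite /kscale normCK NcjM NcjR mulrACA -normCK.
  by rewrite -mulr_sumr -/(knorm2 u) nu -!RCM tt mulVf ?gt_eqF.
move=> x y; rewrite big_ord1 /proj /kscale NcjM NcjR.
have -> : (c * m)%:C * (t%:C * u x * (t%:C * (u y)^*)) =
          (c * m * (t * t))%:C * (u x * (u y)^*) by rewrite !RCM; ring.
by rewrite tt -mulrA mulfV ?gt_eqF // mulr1.
Qed.
Lemma sv_U U V p1 p2 : U != V -> sv U V p1 p2 U = p1.
Proof. by move=> nUV; rewrite /sv eqxx (negbTE nUV) mul1r mul0r addr0. Qed.
Lemma sv_V U V p1 p2 : U != V -> sv U V p1 p2 V = p2.
Proof. by move=> nUV; rewrite /sv eqxx eq_sym (negbTE nUV) mul1r mul0r add0r. Qed.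
Lemma sv_o U V p1 p2 x : x != U -> x != V -> sv U V p1 p2 x = 0.
Proof. by move=> /negbTE xU /negbTE xV; rewrite /sv xU xV !mul0r addr0. Qed.

Lemma sv_parity (i j : 'I_d) p1 p2 : in_parity r (sv (UU i) (UU j) p1 p2).
Proof.
move=> s t nt; rewrite sv_o //; apply/eqP => /pair_equal_spec [E1 E2];
  by move: nt; rewrite E1 E2 eqxx.
Qed.

Lemma bket_parity (b : DA d) : exists k, in_parity k (bket b : ket R (DA d)).
Proof.
case: b => s t.
have d0 : (0 < d)%N by apply: leq_ltn_trans (ltn_ord s).
exists (Ordinal (ltn_pmod (t + d - s) d0)) => s' t' nt.
rewrite /bket; case: eqP => // [[E1 E2]]; exfalso; move: nt; rewrite E1 E2.
apply/negP/negPn/eqP/val_inj => /=.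
have ls := ltn_ord s; have lt := ltn_ord t.
rewrite modnDmr; have -> : (s + (t + d - s) = t + d)%N by lia.
by rewrite modnDr modn_small.
Qed.

Lemma knorm2_sv (U V : DA d) p1 p2 : U != V ->
  knorm2 (sv U V p1 p2) = p1 * p1^* + p2 * p2^*.
Proof.
move=> nUV; rewrite /knorm2 -(sum_sv_norm p1 p2 nUV).
by apply: eq_bigr => x _; rewrite normCK.
Qed.

Lemma knorm2_b (b : DA d) : knorm2 (bket b : ket R (DA d)) = 1.
Proof.
rewrite /knorm2 (bigD1 b) //= big1 => [|x /negbTE nx]; last first.
  by rewrite /bket nx normr0 expr0n.
by rewrite /bket eqxx normr1 expr1n addr0.
Qed.

Lemma sum_bb (f : DA d -> C) x y :
  \sum_(b : DA d) f b * (bket b x * (bket b y)^*) = f x * (x == y)%:R.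
Proof.
rewrite (bigD1 x) //= big1 => [|b /negbTE nb]; last first.
  by rewrite /bket [x == b]eq_sym nb mul0r mulr0.
by rewrite /bket eqxx mul1r addr0 rmorph_nat eq_sym.
Qed.
Lemma valid_gen (i j : 'I_d) (p1 p2 : C) (k : R) (u : ket R (DA d)) (P : op R (DA d)) :
  i != j -> 0 < k ->
  (forall x, u x = sv (UU i) (UU j) p1 p2 x) ->
  (forall x y, P x y = k%:C * (u x * (u y)^*)) ->
  k%:C * (p1 * p1^* + p2 * p2^*) = 1 ->
  valid_meas2 ((P, opsub idop P) : meas2 R d).
Proof.
move=> nij k0 Hu HP Hn; have nUV := UU_neq nij.
set U := UU i in nUV Hu *; set V := UU j in nUV Hu *.
have kC0 : k%:C != 0 by apply/eqP => /(congr1 (@complex.Re _)) /= /eqP; rewrite gt_eqF.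
have Nn : p1 * p1^* + p2 * p2^* = (k^-1)%:C.
  by rewrite fmorphV /= -(mulKf kC0 (_ + _)) Hn mulr1.
have kinv0 : 0 < k^-1 by rewrite invr_gt0.
rewrite /valid_meas2 /=.
split.
  apply: cone_ext (cone_single (ltW k0) kinv0 (sv_parity i j p1 p2) _).
    by move=> x y; rewrite HP !Hu.
  by rewrite knorm2_sv.
split; last by move=> x y; rewrite /opsub /=; ring.
pose u' := sv U V (p2^*) (- p1^*).
pose c (b : DA d) : R := ((b != U) && (b != V))%:R.
have H1 := cone_single (ltW k0) kinv0 (sv_parity i j (p2^*) (- p1^*)).
have H2 : pure_cone11 (fun x y => \sum_(b : DA d) (c b)%:C * (bket b x * (bket b y)^*)).
  apply: cone_sum => b; have [kb pb] := bket_parity b.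
  apply: (cone_single _ ltr01 pb); first by rewrite /c ler0n.
  by rewrite knorm2_b.
apply: cone_ext (cone_add (H1 _) H2); last first.
  rewrite knorm2_sv // -Nn NcjN' !NcjK; ring.
move=> x y; rewrite /opsub /= HP sum_bb !Hu -/U -/V /c /idop.
have nVU : V != U by rewrite eq_sym.
have E1 : (true%:R : C) = k%:C * (p1 * p1^* + p2 * p2^*) by rewrite Hn.
have [->|xU] := eqVneq x U; [|have [->|xV] := eqVneq x V];
  (have [->|yU] := eqVneq y U; [|have [->|yV] := eqVneq y V]);
  rewrite ?sv_U ?sv_V ?(sv_o _ _ xU xV) ?(sv_o _ _ yU yV) // ?eqxx ?(negbTE nUV) ?(negbTE nVU)
     ?(negbTE xU) ?(negbTE xV) ?(negbTE yU) ?(negbTE yV) ?[y == x]eq_sym ?E1 /=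
     ?NcjN' ?NcjK ?rmorph0; try ring.
Qed.
Lemma NcjX (a : C) n : Num.conj (a ^+ n) = Num.conj a ^+ n. Proof. exact: rmorphXn. Qed.
Lemma NcjD (a b : C) : Num.conj (a + b) = Num.conj a + Num.conj b. Proof. exact: rmorphD. Qed.
Lemma RCX (a : R) n : (a ^+ n)%:C = a%:C ^+ n. Proof. exact: rmorphXn. Qed.
Lemma RCN (a : R) : (- a)%:C = - a%:C. Proof. exact: rmorphN. Qed.
Lemma RCB (a b : R) : (a - b)%:C = a%:C - b%:C. Proof. exact: rmorphB. Qed.
Lemma RC1 : (1 : R)%:C = 1. Proof. exact: rmorph1. Qed.
Lemma RC0 : (0 : R)%:C = 0. Proof. exact: rmorph0. Qed.
Lemma RCn n : (n%:R : R)%:C = n%:R. Proof. exact: rmorph_nat. Qed.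

Lemma sq_norm (z : C) (a : R) : z * Num.conj z = a%:C ->
  z ^+ 2 * Num.conj (z ^+ 2) = (a ^+ 2)%:C.
Proof. by move=> H; rewrite NcjX -exprMn H RCX. Qed.

Lemma XX (A B om : C) (a b P1 P2 Q1 Q2 : R) :
  a != 0 -> A * Num.conj A = (a ^+ 2)%:C -> om * Num.conj om = 1 ->
  Num.conj om * B * a%:C = A * b%:C ->
  (Num.conj P1%:C * Num.conj Q1%:C * A + Num.conj P2%:C * Num.conj (om * Q2%:C) * B) *
  Num.conj (Num.conj P1%:C * Num.conj Q1%:C * A + Num.conj P2%:C * Num.conj (om * Q2%:C) * B)
  = ((P1 * Q1 * a + P2 * Q2 * b) ^+ 2)%:C.
Proof.
move=> a0 HA Hom Hw.
have aC0 : a%:C != 0 by apply: contra a0 => /eqP/(congr1 (@complex.Re _)) /= ->.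
have Hw' : om * Num.conj B * a%:C = Num.conj A * b%:C.
  by move: (congr1 Num.conj Hw); rewrite !NcjM !NcjR NcjK.
rewrite !NcjD !NcjM !NcjR !NcjK.
apply: (mulfI (mulf_neq0 aC0 aC0)).
have -> : a%:C * a%:C * ((P1%:C * Q1%:C * A + P2%:C * (Num.conj om * Q2%:C) * B) *
     (P1%:C * Q1%:C * Num.conj A + P2%:C * (om * Q2%:C) * Num.conj B)) =
   (P1%:C * Q1%:C * A * a%:C + P2%:C * Q2%:C * (Num.conj om * B * a%:C)) *
   (P1%:C * Q1%:C * Num.conj A * a%:C + P2%:C * Q2%:C * (om * Num.conj B * a%:C)) by ring.
rewrite Hw Hw'.
have -> : (P1%:C * Q1%:C * A * a%:C + P2%:C * Q2%:C * (A * b%:C)) *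
  (P1%:C * Q1%:C * Num.conj A * a%:C + P2%:C * Q2%:C * (Num.conj A * b%:C)) =
  (A * Num.conj A) * (P1%:C * Q1%:C * a%:C + P2%:C * Q2%:C * b%:C) ^+ 2 by ring.
rewrite HA !RCX !RCD !RCM; ring.
Qed.
Lemma correl_real (i j : 'I_d) (om : C) (a b k l P1 P2 Q1 Q2 : R) u w P Q :
  i != j -> a != 0 ->
  alpha i * Num.conj (alpha i) = a%:C -> alpha j * Num.conj (alpha j) = b%:C ->
  om * Num.conj om = 1 ->
  Num.conj om * alpha j ^+ 2 * a%:C = alpha i ^+ 2 * b%:C ->
  \sum_(s < d) `|alpha s| ^+ 2 = 1 ->
  (forall x, u x = sv (UU i) (UU j) P1%:C P2%:C x) ->
  (forall x, w x = sv (UU i) (UU j) Q1%:C (om * Q2%:C) x) ->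
  (forall x y, P x y = k%:C * (u x * (u y)^*)) ->
  (forall x y, Q x y = l%:C * (w x * (w y)^*)) ->
  correl ((P, opsub idop P) : meas2 R d) ((Q, opsub idop Q) : meas2 R d) rho =
  (4 * k * l * (P1 * Q1 * a + P2 * Q2 * b) ^+ 2
   - 2 * k * (P1 ^+ 2 * a ^+ 2 + P2 ^+ 2 * b ^+ 2)
   - 2 * l * (Q1 ^+ 2 * a ^+ 2 + Q2 ^+ 2 * b ^+ 2) + 1)%:C.
Proof.
move=> nij a0 Ha Hb Hom Hw Hn Hu Hw' HP HQ.
have HA := sq_norm Ha; have HB := sq_norm Hb.
rewrite correl_gen (T_PQ nij Hu Hw' HP HQ) (T_PI nij Hu HP) (T_IQ nij Hw' HQ) (T_II Hn).
rewrite (XX _ _ _ _ a0 HA Hom Hw).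
have E1 : forall (p : R) (Z : C) (z : R), Z * Num.conj Z = z%:C ->
   Num.conj p%:C * Z * Num.conj (Num.conj p%:C * Z) = (p ^+ 2 * z)%:C.
  by move=> p Z z HZ; rewrite !NcjM !NcjR RCM RCX -HZ; ring.
have E2 : forall (q : R) (Z : C) (z : R), Z * Num.conj Z = z%:C ->
   Num.conj (om * q%:C) * Z * Num.conj (Num.conj (om * q%:C) * Z) = (q ^+ 2 * z)%:C.
  move=> q Z z HZ; rewrite !NcjM !NcjR NcjK RCM RCX -HZ.
  by rewrite -[RHS]mul1r -Hom; ring.
rewrite (E1 _ _ _ HA) (E1 _ _ _ HB) (E2 _ _ _ HB) (E1 _ _ _ HA).
rewrite !(RCD, RCB, RCM, RCX, RCn, RC1).
ring.
Qed.
Lemma chsh_real (a b c s l : R) :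
  l * (2 * c + 2) = 1 -> c ^+ 2 + s ^+ 2 = 1 ->
  let C k P1 P2 Q1 Q2 := 4 * k * l * (P1 * Q1 * a + P2 * Q2 * b) ^+ 2
   - 2 * k * (P1 ^+ 2 * a ^+ 2 + P2 ^+ 2 * b ^+ 2)
   - 2 * l * (Q1 ^+ 2 * a ^+ 2 + Q2 ^+ 2 * b ^+ 2) + 1 in
  C 1 1 0 (c + 1) s + C 1 1 0 (c + 1) (- s) + C (1 / 2) 1 1 (c + 1) s
    - C (1 / 2) 1 1 (c + 1) (- s)
  = 2 * c * (a ^+ 2 + b ^+ 2) - 2 * (a ^+ 2 + b ^+ 2) + 2 + 4 * a * b * s.
Proof.
move=> Hl Hcs C; rewrite /C.
apply/eqP; rewrite -subr_eq0; apply/eqP.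
transitivity ((l * (2 * c + 2) - 1) * (2 * (c + 1) * a ^+ 2 + 4 * a * b * s - 2 * (1 - c) * b ^+ 2)
   - 4 * l * (s ^+ 2 + c ^+ 2 - 1) * b ^+ 2).
  by field.
by rewrite Hl (addrC (s ^+ 2)) Hcs !subrr mul0r mulr0 mul0r subrr.
Qed.
Lemma chsh_gen (i j : 'I_d) (om : C) (a b c s l : R) u0 u1 w0 w1 P0 P1 Q0 Q1 :
  i != j -> 0 < a ->
  alpha i * Num.conj (alpha i) = a%:C -> alpha j * Num.conj (alpha j) = b%:C ->
  om * Num.conj om = 1 ->
  Num.conj om * alpha j ^+ 2 * a%:C = alpha i ^+ 2 * b%:C ->
  \sum_(s < d) `|alpha s| ^+ 2 = 1 ->
  0 < l -> l * (2 * c + 2) = 1 -> c ^+ 2 + s ^+ 2 = 1 ->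
  (forall x, u0 x = sv (UU i) (UU j) 1%:C 0%:C x) ->
  (forall x, u1 x = sv (UU i) (UU j) 1%:C 1%:C x) ->
  (forall x, w0 x = sv (UU i) (UU j) (c + 1)%:C (om * s%:C) x) ->
  (forall x, w1 x = sv (UU i) (UU j) (c + 1)%:C (om * (- s)%:C) x) ->
  (forall x y, P0 x y = 1%:C * (u0 x * (u0 y)^*)) ->
  (forall x y, P1 x y = (1 / 2)%:C * (u1 x * (u1 y)^*)) ->
  (forall x y, Q0 x y = l%:C * (w0 x * (w0 y)^*)) ->
  (forall x y, Q1 x y = l%:C * (w1 x * (w1 y)^*)) ->
  let A0 : meas2 R d := (P0, opsub idop P0) in
  let A1 : meas2 R d := (P1, opsub idop P1) in
  let B0 : meas2 R d := (Q0, opsub idop Q0) in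
  let B1 : meas2 R d := (Q1, opsub idop Q1) in
  [/\ valid_meas2 A0, valid_meas2 A1, valid_meas2 B0, valid_meas2 B1 &
   CHSH A0 A1 B0 B1 rho =
   (2 * c * (a ^+ 2 + b ^+ 2) - 2 * (a ^+ 2 + b ^+ 2) + 2 + 4 * a * b * s)%:C].
Proof.
move=> nij a0 Ha Hb Hom Hw Hn l0 Hl Hcs Hu0 Hu1 Hw0 Hw1 HP0 HP1 HQ0 HQ1 A0 A1 B0 B1.
have an0 : a != 0 by rewrite gt_eqF.
have Hq : forall t : R, l%:C * ((c + 1)%:C * Num.conj (c + 1)%:C +
           om * t%:C * Num.conj (om * t%:C)) = 1 -> True by [].
split.
- apply: (valid_gen nij ltr01 Hu0 HP0).
  by rewrite !NcjR -!RCM -!RCD -RCM mul0r addr0 !mul1r.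
- apply: (valid_gen nij _ Hu1 HP1); first by rewrite divr_gt0 ?ltr01 ?ltr0n.
  by rewrite !NcjR -!RCM -!RCD -RCM !mul1r -[RHS]RC1; apply: congr1; field.
- rewrite /B0; apply: (valid_gen nij l0 Hw0 HQ0).
  rewrite !NcjM !NcjR mulrACA Hom mul1r -!RCM -!RCD -RCM.
  have e : l * ((c + 1) * (c + 1) + s * s) = 1 by rewrite -[RHS]Hl; congr (_ * _); transitivity ((c ^+ 2 + s ^+ 2) + 2 * c + 1); [ring | rewrite Hcs; ring].
  by rewrite e RC1.
- rewrite /B1; apply: (valid_gen nij l0 Hw1 HQ1).
  rewrite !NcjM !NcjR mulrACA Hom mul1r -!RCM -!RCD -RCM.
  have e : l * ((c + 1) * (c + 1) + - s * - s) = 1 by rewrite -[RHS]Hl; congr (_ * _); transitivity ((c ^+ 2 + s ^+ 2) + 2 * c + 1); [ring | rewrite Hcs; ring].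
  by rewrite e RC1.
rewrite /CHSH.
rewrite (correl_real nij an0 Ha Hb Hom Hw Hn Hu0 Hw0 HP0 HQ0).
rewrite (correl_real nij an0 Ha Hb Hom Hw Hn Hu0 Hw1 HP0 HQ1).
rewrite (correl_real nij an0 Ha Hb Hom Hw Hn Hu1 Hw0 HP1 HQ0).
rewrite (correl_real nij an0 Ha Hb Hom Hw Hn Hu1 Hw1 HP1 HQ1).
rewrite -!RCD -RCB.
by rewrite (chsh_real a b Hl Hcs).
Qed.
End S.
Lemma F_gt2 (R : realType) (a b : R) : 0 < a -> 0 < b ->
  2 < 2 + 2 * (a ^+ 2 + b ^+ 2) *
     (Num.sqrt (1 + 4 * a ^+ 2 * b ^+ 2 / (a ^+ 2 + b ^+ 2) ^+ 2) - 1).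
Proof.
move=> a0 b0.
have N0 : 0 < a ^+ 2 + b ^+ 2 by rewrite addr_gt0 // exprn_gt0.
rewrite ltrDl; apply: mulr_gt0; first by rewrite mulr_gt0.
rewrite subr_gt0 -{1}sqrtr1 ltr_sqrt; last by rewrite addr_gt0 // ?ltr01 divr_gt0 // ?exprn_gt0 // !mulr_gt0 // ?exprn_gt0.
by rewrite ltrDl divr_gt0 // ?exprn_gt0 // !mulr_gt0 // ?exprn_gt0.
Qed.

Lemma final_real (R : realType) (a b c s : R) : 0 < a -> 0 < b ->
  c ^+ 2 + s ^+ 2 = 1 -> 0 <= c -> s / c = 2 * a * b / (a ^+ 2 + b ^+ 2) ->
  2 * c * (a ^+ 2 + b ^+ 2) - 2 * (a ^+ 2 + b ^+ 2) + 2 + 4 * a * b * s =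
  2 + 2 * (a ^+ 2 + b ^+ 2) *
     (Num.sqrt (1 + 4 * a ^+ 2 * b ^+ 2 / (a ^+ 2 + b ^+ 2) ^+ 2) - 1).
Proof.
move=> a0 b0 Hcs c0 Hsc.
set N := a ^+ 2 + b ^+ 2 in Hsc *.
have N0 : 0 < N by rewrite addr_gt0 // exprn_gt0.
set sg := 2 * a * b / N in Hsc *.
have sg0 : 0 < sg by rewrite divr_gt0 // !mulr_gt0.
have -> : 4 * a ^+ 2 * b ^+ 2 / N ^+ 2 = sg ^+ 2.
  by rewrite /sg expr_div_n !exprMn; congr (_ / _); rewrite -natrX.
have cn0 : c != 0.
  apply/eqP => c00; move: Hsc; rewrite c00 invr0 mulr0 => /eqP.
  by rewrite eq_sym gt_eqF.
have Hs : s = sg * c by rewrite -Hsc -mulrA mulVf // mulr1.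
set t := Num.sqrt (1 + sg ^+ 2).
have t0 : 0 <= t by exact: sqrtr_ge0.
have tt : t ^+ 2 = 1 + sg ^+ 2 by rewrite sqr_sqrtr // addr_ge0 // sqr_ge0.
have ct : c * t = 1.
  have e : (c * t) ^+ 2 = 1.
    by rewrite exprMn tt -[RHS]Hcs Hs; ring.
  have : 0 <= c * t by rewrite mulr_ge0.
  move: e; rewrite -[X in _ = X](expr1n _ 2) => /eqP.
  rewrite eqrXn2 ?ler01 // ?mulr_ge0 // => /eqP -> //.
have -> : 4 * a * b * s = 2 * N * sg * s by rewrite /sg; field; rewrite gt_eqF.
rewrite Hs.
transitivity (2 + 2 * N * (c * (1 + sg ^+ 2) - 1)); first ring.
by rewrite -tt expr2 mulrA ct mul1r.
Qed.
Lemma norm_pos (R : realType) (z : R[i]) : z != 0 ->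
  exists a : R, 0 < a /\ z * Num.conj z = a%:C.
Proof.
move=> z0.
have r : `|z| ^+ 2 \is Num.real by rewrite realX // normr_real.
exists (complex.Re (`|z| ^+ 2)); split; last by rewrite (RRe_real r) normCK.
by rewrite -ltcR (RRe_real r) exprn_gt0 // normr_gt0.
Qed.

Lemma RC1' (R : realType) : (1 : R)%:C = 1. Proof. exact: rmorph1. Qed.
Lemma RC0' (R : realType) : (0 : R)%:C = 0. Proof. exact: rmorph0. Qed.
Lemma RCn' (R : realType) n : (n%:R : R)%:C = n%:R. Proof. exact: rmorph_nat. Qed.
Lemma RCM' (R : realType) (a b : R) : (a * b)%:C = a%:C * b%:C. Proof. exact: rmorphM. Qed.
Lemma RCV' (R : realType) (a : R) : (a^-1)%:C = (a%:C)^-1. Proof. exact: fmorphV. Qed.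
Lemma RCN'' (R : realType) (a : R) : (- a)%:C = - a%:C. Proof. exact: rmorphN. Qed.
Lemma NcjR' (R : realType) (a : R) : Num.conj (a%:C) = a%:C. Proof. exact: conjc_real. Qed.
Lemma NcjM'' (R : realType) (a b : R[i]) : Num.conj (a * b) = Num.conj a * Num.conj b.
Proof. exact: rmorphM. Qed.
Lemma NcjV' (R : realType) (a : R[i]) : Num.conj (a^-1) = (Num.conj a)^-1.
Proof. exact: fmorphV. Qed.
Lemma NcjK' (R : realType) (a : R[i]) : Num.conj (Num.conj a) = a.
Proof. exact: conjcK. Qed.
Lemma NcjX' (R : realType) (a : R[i]) n : Num.conj (a ^+ n) = Num.conj a ^+ n.
Proof. exact: rmorphXn. Qed.

Lemma om_lemma (R : realType) (A B : R[i]) (a b : R) : 0 < a -> 0 < b ->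
  A * Num.conj A = (a ^+ 2)%:C -> B * Num.conj B = (b ^+ 2)%:C ->
  let om := B * Num.conj A / (a * b)%:C in
  om * Num.conj om = 1 /\ Num.conj om * B * a%:C = A * b%:C.
Proof.
move=> a0 b0 HA HB om.
have aC : a%:C != 0 by rewrite -RC0' (inj_eq (@complexI _)) gt_eqF.
have bC : b%:C != 0 by rewrite -RC0' (inj_eq (@complexI _)) gt_eqF.
rewrite /om !NcjM'' NcjV' NcjR' NcjK' RCM'; split.
  have -> : B * Num.conj A / (a%:C * b%:C) * (Num.conj B * A / (a%:C * b%:C)) =
      (B * Num.conj B) * (A * Num.conj A) / ((a%:C * b%:C) * (a%:C * b%:C)).
    by field; apply/andP; split; first [exact: aC | exact: bC].
  rewrite HA HB -!RCM' RCM' RCM'.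
  by field; rewrite ?mulf_neq0 //; apply/andP; split; first [exact: aC | exact: bC].
have -> : Num.conj B * A / (a%:C * b%:C) * B * a%:C =
      (B * Num.conj B) * A * a%:C / (a%:C * b%:C).
  by field; apply/andP; split; first [exact: aC | exact: bC].
rewrite HB expr2 RCM'.
by field; apply/andP; split; first [exact: aC | exact: bC].
Qed.
Unset Implicit Arguments.
Set Strict Implicit.
Theorem mainTheorem4 (R : realType) (d : nat) (r : 'I_d) (alpha : 'I_d -> R[i]) :
  (2 <= d)%N ->
  \sum_(i < d) `|alpha i| ^+ 2 = 1 ->
  (exists i j : 'I_d, i != j /\ alpha i != 0 /\ alpha j != 0) ->
  (exists A0 A1 B0 B1 : meas2 R d,
      [/\ valid_meas2 A0, valid_meas2 A1, valid_meas2 B0, valid_meas2 B1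
        & 2 < CHSH A0 A1 B0 B1 (two_copies r alpha)]) /\
  (forall i0 i1 : 'I_d, nat_of_ord i0 = 0%N -> nat_of_ord i1 = 1%N ->
     0 < alpha i0 -> 0 < alpha i1 ->
     let a' : R := (complex.Re (alpha i0)) ^+ 2 in
     let b' : R := (complex.Re (alpha i1)) ^+ 2 in
     forall theta : R, 0 < theta <= pi / 2 ->
     tan theta = 2 * a' * b' / (a' ^+ 2 + b' ^+ 2) ->
     (* Alice's states on (D1,A2), Bob's on (D2,A1) *)
     let up    : ket R (DA d) := bket (i0, r) in
     let down  : ket R (DA d) := bket (i1, oplus i1 r) in
     let up'   : ket R (DA d) := bket (i0, r) in
     let down' : ket R (DA d) := bket (i1, oplus i1 r) in
     let u_plus  := kadd (kscale (cos theta + 1)%:C up') (kscale (sin theta)%:C down') in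
     let u_minus := ksub (kscale (cos theta + 1)%:C up') (kscale (sin theta)%:C down') in
     let a0 := proj up in
     let a1 := opscale (1 / 2) (proj (kadd up down)) in
     let b0 := opscale (1 / (2 * cos theta + 2))%:C (proj u_plus) in
     let b1 := opscale (1 / (2 * cos theta + 2))%:C (proj u_minus) in
     let A0 : meas2 R d := (a0, opsub idop a0) in
     let A1 : meas2 R d := (a1, opsub idop a1) in
     let B0 : meas2 R d := (b0, opsub idop b0) in
     let B1 : meas2 R d := (b1, opsub idop b1) in
     let F : R := 2 + 2 * (a' ^+ 2 + b' ^+ 2) *
        (Num.sqrt (1 + 4 * a' ^+ 2 * b' ^+ 2 / (a' ^+ 2 + b' ^+ 2) ^+ 2) - 1) in
     [/\ valid_meas2 A0, valid_meas2 A1, valid_meas2 B0, valid_meas2 B1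
       & CHSH A0 A1 B0 B1 (two_copies r alpha) = F%:C /\ 2 < F]).

Proof.
move=> d2 Hn Hex; split.
-
  case: Hex => i [j [nij [ai0 aj0]]].
  have [a [a0 Ha]] := norm_pos ai0.
  have [b [b0 Hb]] := norm_pos aj0.
  have HA := sq_norm Ha; have HB := sq_norm Hb.
  set A := alpha i ^+ 2 in HA *; set B := alpha j ^+ 2 in HB *.
  have [Hom Hw] := om_lemma a0 b0 HA HB.
  set om := B * Num.conj A / (a * b)%:C in Hom Hw.
  pose N := a ^+ 2 + b ^+ 2.
  have N0 : 0 < N by rewrite addr_gt0 // exprn_gt0.
  pose sg := 2 * a * b / N.
  have sg0 : 0 < sg by rewrite divr_gt0 // !mulr_gt0.
  pose t := Num.sqrt (1 + sg ^+ 2).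
  have tt : t ^+ 2 = 1 + sg ^+ 2 by rewrite sqr_sqrtr // addr_ge0 // sqr_ge0.
  have t0 : 0 < t by rewrite sqrtr_gt0 addr_gt0 // exprn_gt0.
  pose c := t^-1; pose s := sg * t^-1.
  have c0 : 0 < c by rewrite invr_gt0.
  have Hcs : c ^+ 2 + s ^+ 2 = 1.
    have t2 : t ^+ 2 != 0 by rewrite expf_neq0 // gt_eqF.
    rewrite /c /s -[RHS](mulfV t2) {1}tt.
    by field; rewrite gt_eqF.
  pose l := (2 * c + 2)^-1.
  have cc0 : 0 < 2 * c + 2 by rewrite addr_gt0 // mulr_gt0.
  have l0 : 0 < l by rewrite invr_gt0.
  have Hl : l * (2 * c + 2) = 1 by rewrite mulVf // gt_eqF.
  have Hsc : s / c = 2 * a * b / (a ^+ 2 + b ^+ 2).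
    by rewrite /s /c invrK -mulrA mulVf ?mulr1 // gt_eqF.
  pose U := UU r i; pose V := UU r j.
  pose u0 : ket R (DA d) := sv U V 1%:C 0%:C; pose u1 : ket R (DA d) := sv U V 1%:C 1%:C.
  pose w0 := sv U V (c + 1)%:C (om * s%:C); pose w1 := sv U V (c + 1)%:C (om * (- s)%:C).
  have := chsh_gen (r := r) (alpha := alpha) (u0 := u0) (u1 := u1) (w0 := w0) (w1 := w1)
    (P0 := opscale 1%:C (proj u0)) (P1 := opscale (1 / 2)%:C (proj u1))
    (Q0 := opscale l%:C (proj w0)) (Q1 := opscale l%:C (proj w1))
    nij a0 Ha Hb Hom Hw Hn l0 Hl Hcs (fun _ => erefl) (fun _ => erefl)
    (fun _ => erefl) (fun _ => erefl) (fun _ _ => erefl) (fun _ _ => erefl)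
    (fun _ _ => erefl) (fun _ _ => erefl).
  move=> [v0 v1 v2 v3 E].
  eexists; eexists; eexists; eexists; split; [exact: v0|exact: v1|exact: v2|exact: v3|].
  rewrite E (final_real a0 b0 Hcs (ltW c0) Hsc) -(RCn' R 2) ltcR.
  exact: F_gt2.
-
  move=> i0 i1 h0 h1 p0 p1 a' b' th Hth Htan up down up' down' u_plus u_minus
    a0 a1 b0 b1 A0 A1 B0 B1 F.
  have nij : i0 != i1 by apply/eqP => E; move: h0 h1; rewrite E => ->.
  have realE : forall z : R[i], 0 < z -> z = (complex.Re z)%:C.
    by move=> z z0; rewrite RRe_real // gtr0_real.
  have x0 : 0 < complex.Re (alpha i0) by rewrite -ltcR -(realE _ p0) RC0'.
  have y0 : 0 < complex.Re (alpha i1) by rewrite -ltcR -(realE _ p1) RC0'.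
  have a'0 : 0 < a' by rewrite exprn_gt0.
  have b'0 : 0 < b' by rewrite exprn_gt0.
  have Ha : alpha i0 * Num.conj (alpha i0) = a'%:C.
    by rewrite [alpha i0]realE // NcjR' -RCM' -expr2.
  have Hb : alpha i1 * Num.conj (alpha i1) = b'%:C.
    by rewrite [alpha i1]realE // NcjR' -RCM' -expr2.
  have Hom : (1 : R[i]) * Num.conj 1 = 1 by rewrite rmorph1 mulr1.
  have Hw : Num.conj 1 * alpha i1 ^+ 2 * a'%:C = alpha i0 ^+ 2 * b'%:C.
    rewrite rmorph1 mul1r [alpha i1]realE // [alpha i0]realE // -!(rmorphXn (real_complex R)).
    by rewrite /= -!RCM' mulrC.
  set c := cos th; set s := sin th.
  have c0 : 0 <= c.
    apply: cos_ge0_pihalf; case/andP: Hth => h1' h2'; rewrite h2' andbT.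
    by rewrite (le_trans _ (ltW h1')) // oppr_le0 divr_ge0 // pi_ge0.
  have cc0 : 0 < 2 * c + 2 by rewrite ltr_wpDl // mulr_ge0.
  set l := 1 / (2 * c + 2).
  have l0 : 0 < l by rewrite divr_gt0.
  have Hl : l * (2 * c + 2) = 1 by rewrite /l div1r mulVf // gt_eqF.
  have Hcs : c ^+ 2 + s ^+ 2 = 1 by exact: cos2Dsin2.
  have Hsc : s / c = 2 * a' * b' / (a' ^+ 2 + b' ^+ 2) by rewrite -Htan.
  have UU0 : UU r i0 = (i0, r).
    congr (_, _); apply: val_inj => /=; rewrite h0 add0n modn_small //.
  have Hu0 : forall x, up x = sv (UU r i0) (UU r i1) 1%:C 0%:C x.
    by move=> x; rewrite /sv UU0 RC1' RC0' mulr1 mulr0 addr0.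
  have Hu1 : forall x, kadd up down x = sv (UU r i0) (UU r i1) 1%:C 1%:C x.
    by move=> x; rewrite /sv UU0 RC1' !mulr1.
  have Hw0 : forall x, u_plus x = sv (UU r i0) (UU r i1) (c + 1)%:C (1 * s%:C) x.
    by move=> x; rewrite /sv UU0 /u_plus /kadd /kscale /up' /down' mul1r; ring.
  have Hw1 : forall x, u_minus x = sv (UU r i0) (UU r i1) (c + 1)%:C (1 * (- s)%:C) x.
    by move=> x; rewrite /sv UU0 /u_minus /ksub /kscale /up' /down' mul1r RCN''; ring.
  have HP0 : forall x y, a0 x y = 1%:C * (up x * Num.conj (up y)).
    by move=> x y; rewrite RC1' mul1r.
  have HP1 : forall x y, a1 x y = (1 / 2)%:C * (kadd up down x * Num.conj (kadd up down y)).
    have half : ((1 / 2 : R)%:C) = 1 / 2 by rewrite !div1r RCV' RCn'.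
    by move=> x y; rewrite half.
  have := chsh_gen (r := r) (alpha := alpha) (P0 := a0) (P1 := a1) (Q0 := b0) (Q1 := b1)
    nij a'0 Ha Hb Hom Hw Hn l0 Hl Hcs Hu0 Hu1 Hw0 Hw1 HP0 HP1
    (fun _ _ => erefl) (fun _ _ => erefl).
  move=> [v0 v1 v2 v3 E]; split => //; split; last exact: F_gt2.
  by rewrite E (final_real a'0 b'0 Hcs c0 Hsc).
Qed.
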